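(* Assume the Continuum Hypothesis. Let $a$ be any non-trivial automorphism of the Turing degrees. Then there is no family $G$ of $1$-generic Turing degrees such that: (1) for every Turing degree $\mathbf{y}$ there is a degree in $G$ that is $1$-generic over $\mathbf{y}$; and (2) for every $\mathbf{x}\in G$ and every degree $\mathbf{y}$, if $\mathbf{x}$ is $1$-generic over $\mathbf{y}$, then there are reals $x,z\in 2^{\omega}$ with $\deg(x)=\mathbf{x}$ and $\deg(z)=a(\mathbf{x})$ such that the pair $(x,z)$ is $1$-generic over $\mathbf{y}$.
   Context: Reals are identified with elements of $2^{\omega}$. A Turing degree is an equivalence class of reals under Turing equivalence $\equiv_T$; an automorphism of the Turing degrees is a bijection $a$ of the set of Turing degrees with $\mathbf{u}\le_T\mathbf{v}\iff a(\mathbf{u})\le_T a(\mathbf{v})$; it is non-trivial if it is not the identity. For a real $y$, a real $g\in 2^{\omega}$ is $1$-generic over $y$ if for every set $S\subseteq 2^{<\omega}$ that is $\Sigma^0_1$ relative to $y$ there is an initial segment $\sigma$ of $g$ such that either $\sigma\in S$ or no extension $\tau\supseteq\sigma$ lies in $S$. A pair $(x,z)\in 2^{\omega}\times 2^{\omega}$ is $1$-generic over $y$ if for every set $S\subseteq 2^{<\omega}\times 2^{<\omega}$ that is $\Sigma^0_1$ relative to $y$ there are initial segments $\sigma$ of $x$ and $\tau$ of $z$ such that either $(\sigma,\tau)\in S$ or no pair $(\sigma',\tau')$ with $\sigma'\supseteq\sigma,\tau'\supseteq\tau$ lies in $S$. Being $1$-generic over $y$ depends only on the degree of $y$, so one speaks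 of being $1$-generic over a degree $\mathbf{y}$. A degree is a $1$-generic degree if it contains a $1$-generic real (over a computable real), and a degree $\mathbf{x}$ is $1$-generic over $\mathbf{y}$ if it contains a real $1$-generic over $\mathbf{y}$. *)

(* Defs.v *)
From Stdlib Require Import Arith List.
Import ListNotations.

Definition real := nat -> bool.

Definition cpair (x y : nat) : nat := (x + y) * (x + y + 1) / 2 + y.

(** Codes of oracle partial recursive functions nat -> nat
    (unary, with Cantor pairing used for tupling). *)
Inductive code : Type :=
| CZero : code
| CSucc : code
| CId   : code
| COracle : code
| CFst  : code
| CSnd  : code
| CPair : code -> code -> code
| CComp : code -> code -> code
| CRec  : code -> code -> code
| CMu   : code -> code.

Inductive eval (A : real) : code -> nat -> nat -> Prop :=
| ev_zero x : eval A CZero x 0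
| ev_succ x : eval A CSucc x (S x)
| ev_id x : eval A CId x x
| ev_oracle x : eval A COracle x (if A x then 1 else 0)
| ev_fst a b : eval A CFst (cpair a b) a
| ev_snd a b : eval A CSnd (cpair a b) b
| ev_pair f g x u v : eval A f x u -> eval A g x v -> eval A (CPair f g) x (cpair u v)
| ev_comp f g x w v : eval A g x w -> eval A f w v -> eval A (CComp f g) x v
| ev_rec0 f g x v : eval A f x v -> eval A (CRec f g) (cpair x 0) v
| ev_recS f g x n w v :
    eval A (CRec f g) (cpair x n) w ->
    eval A g (cpair x (cpair n w)) v ->
    eval A (CRec f g) (cpair x (S n)) v
| ev_mu f x n :
    eval A f (cpair x n) 0 ->
    (forall m, m < n -> exists k, eval A f (cpair x m) (S k)) ->
    eval A (CMu f) x n.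

Definition turing_le (x y : real) : Prop :=
  exists c : code, forall n, eval y c n (if x n then 1 else 0).
Definition turing_eq (x y : real) : Prop := turing_le x y /\ turing_le y x.

Definition bstring := list bool.
Fixpoint scode (s : bstring) : nat :=
  match s with
  | [] => 0
  | b :: t => S (cpair (if b then 1 else 0) (scode t))
  end.

Definition init_seg (s : bstring) (g : real) : Prop :=
  forall i, i < length s -> nth i s false = g i.

Definition extends (t s : bstring) : Prop := exists u, t = s ++ u.

(** Sigma^0_1 (relative to y) sets of strings / pairs of strings:
    domains of y-partial-computable functions, via the coding. *)
Definition sigma01_strings (y : real) (S : bstring -> Prop) : Prop :=
  exists c : code, forall s, S s <-> exists v, eval y c (scode s) v.
Definition sigma01_pairs (y : real) (S : bstring -> bstring -> Prop) : Prop :=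
  exists c : code, forall s t, S s t <-> exists v, eval y c (cpair (scode s) (scode t)) v.

Definition one_generic_over (y g : real) : Prop :=
  forall S, sigma01_strings y S ->
    exists s, init_seg s g /\ (S s \/ forall t, extends t s -> ~ S t).
Definition pair_one_generic_over (y x z : real) : Prop :=
  forall S, sigma01_pairs y S ->
    exists s t, init_seg s x /\ init_seg t z /\
      (S s t \/ forall s' t', extends s' s -> extends t' t -> ~ S s' t').

(** Degree-level notions (a degree is represented by any of its members). *)
Definition zero_real : real := fun _ => false.
Definition generic_degree (x : real) : Prop :=
  exists g, turing_eq g x /\ one_generic_over zero_real g.
Definition degree_generic_over (x y : real) : Prop :=
  exists g, turing_eq g x /\ one_generic_over y g.

(** An automorphism of the Turing degrees, represented by a map on reals
    inducing it: order preserving and reflecting (hence well defined and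
    injective on degrees) and surjective on degrees. *)
Definition degree_automorphism (a : real -> real) : Prop :=
  (forall x y, turing_le x y <-> turing_le (a x) (a y)) /\
  (forall y, exists x, turing_eq (a x) y).
Definition nontrivial_aut (a : real -> real) : Prop :=
  exists x, ~ turing_eq (a x) x.

(** A family of degrees: a predicate on reals closed under Turing equivalence. *)
Definition degree_family (G : real -> Prop) : Prop :=
  forall x x', turing_eq x x' -> G x -> G x'.

(** The Continuum Hypothesis: every set of reals is countable
    or has the cardinality of the continuum. *)
Definition CH : Prop :=
  forall A : real -> Prop,
    (exists f : {x : real | A x} -> nat, forall u v, f u = f v -> u = v) \/
    (exists g : real -> {x : real | A x}, forall u v, g u = g v -> u = v).

(* Main.v *)
Require Import Defs.
From Stdlib Require Import Arith Lia List Bool.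
Import ListNotations.


Lemma tri_succ s : (S s) * (S s + 1) / 2 = s * (s + 1) / 2 + S s.
Proof.
  replace (S s * (S s + 1)) with (s * (s+1) + S s * 2) by nia.
  rewrite Nat.div_add by lia. lia.
Qed.

Lemma tri_lt s s' : s < s' -> s * (s+1)/2 + s < s' * (s'+1)/2.
Proof.
  induction 1.
  - rewrite tri_succ. lia.
  - rewrite tri_succ. lia.
Qed.

Lemma cpair_inj a b c d : cpair a b = cpair c d -> a = c /\ b = d.
Proof.
  unfold cpair. intros H.
  destruct (lt_eq_lt_dec (a+b) (c+d)) as [[Hl|He]|Hl].
  - pose proof (tri_lt _ _ Hl). lia.
  - rewrite He in H. lia.
  - pose proof (tri_lt _ _ Hl). lia.
Qed.

Section Ind2.
Variable A : real.
Variable P : code -> nat -> nat -> Prop.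
Hypothesis Hzero : forall x, P CZero x 0.
Hypothesis Hsucc : forall x, P CSucc x (S x).
Hypothesis Hid : forall x, P CId x x.
Hypothesis Hor : forall x, P COracle x (if A x then 1 else 0).
Hypothesis Hfst : forall a b, P CFst (cpair a b) a.
Hypothesis Hsnd : forall a b, P CSnd (cpair a b) b.
Hypothesis Hpair : forall f g x u v, eval A f x u -> P f x u -> eval A g x v -> P g x v -> P (CPair f g) x (cpair u v).
Hypothesis Hcomp : forall f g x w v, eval A g x w -> P g x w -> eval A f w v -> P f w v -> P (CComp f g) x v.
Hypothesis Hrec0 : forall f g x v, eval A f x v -> P f x v -> P (CRec f g) (cpair x 0) v.
Hypothesis HrecS : forall f g x n w v, eval A (CRec f g) (cpair x n) w -> P (CRec f g) (cpair x n) w ->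
    eval A g (cpair x (cpair n w)) v -> P g (cpair x (cpair n w)) v -> P (CRec f g) (cpair x (S n)) v.
Hypothesis Hmu : forall f x n, eval A f (cpair x n) 0 -> P f (cpair x n) 0 ->
    (forall m, m < n -> exists k, eval A f (cpair x m) (S k) /\ P f (cpair x m) (S k)) -> P (CMu f) x n.

Fixpoint eval_ind2 c n v (e : eval A c n v) {struct e} : P c n v :=
  match e in eval _ c n v return P c n v with
  | ev_zero _ x => Hzero x
  | ev_succ _ x => Hsucc x
  | ev_id _ x => Hid x
  | ev_oracle _ x => Hor x
  | ev_fst _ a b => Hfst a b
  | ev_snd _ a b => Hsnd a b
  | ev_pair _ f g x u v e1 e2 => Hpair f g x u v e1 (eval_ind2 _ _ _ e1) e2 (eval_ind2 _ _ _ e2)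
  | ev_comp _ f g x w v e1 e2 => Hcomp f g x w v e1 (eval_ind2 _ _ _ e1) e2 (eval_ind2 _ _ _ e2)
  | ev_rec0 _ f g x v e1 => Hrec0 f g x v e1 (eval_ind2 _ _ _ e1)
  | ev_recS _ f g x n w v e1 e2 => HrecS f g x n w v e1 (eval_ind2 _ _ _ e1) e2 (eval_ind2 _ _ _ e2)
  | ev_mu _ f x n e1 H => Hmu f x n e1 (eval_ind2 _ _ _ e1)
      (fun m Hm => match H m Hm with ex_intro _ k ek => ex_intro _ k (conj ek (eval_ind2 _ _ _ ek)) end)
  end.
End Ind2.

Ltac cpinj := repeat match goal with
  | H : cpair _ _ = cpair _ _ |- _ => apply cpair_inj in H; destruct H as [? ?]; subst
  end.

Lemma eval_det A c n v : eval A c n v -> forall v', eval A c n v' -> v = v'.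
Proof.
  induction 1 using eval_ind2; intros v' H'; inversion H'; subst; cpinj; try congruence; auto.
  - apply IHeval2. replace w with w0 by (symmetry; auto); auto.
  - injection H2 as ->. apply IHeval2. replace w with w0 by (symmetry; auto); auto.
  - destruct (lt_eq_lt_dec n v') as [[Hl|He]|Hl]; auto.
    + match goal with Hh : forall m, m < v' -> _ |- _ => destruct (Hh _ Hl) as [k Hk] end.
      apply IHeval in Hk. discriminate.
    + destruct (H0 _ Hl) as [k [_ Hk]].
      match goal with Hh : eval A f (cpair x v') 0 |- _ => apply Hk in Hh end. discriminate.
Qed.


Definition NOT := CComp (CRec (CComp CSucc CZero) CZero) (CPair CZero CId).
Definition PRED := CComp (CRec CZero (CComp CFst CSnd)) (CPair CZero CId).
Definition NZ := CComp NOT CFst.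
Definition CHK := CComp CFst (CPair CId (CMu NZ)).
Definition HEAD := CComp CFst (CComp PRED CHK).
Definition TAILSTEP := CComp CSnd (CComp PRED (CComp CSnd CSnd)).
Definition REC := CRec CId TAILSTEP.
Definition LK := CComp HEAD REC.

Lemma not_fw A n : eval A NOT n (match n with 0 => 1 | S _ => 0 end).
Proof.
  unfold NOT. eapply ev_comp. apply ev_pair; [apply ev_zero | apply ev_id].
  destruct n.
  - apply ev_rec0. eapply ev_comp; [apply ev_zero| apply ev_succ].
  - assert (exists w, eval A (CRec (CComp CSucc CZero) CZero) (cpair 0 n) w) as [w Hw].
    { clear. induction n.
      - eexists. apply ev_rec0. eapply ev_comp; [apply ev_zero| apply ev_succ].
      - destruct IHn as [w Hw]. eexists. eapply ev_recS; [exact Hw| apply ev_zero]. }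
    eapply ev_recS; [exact Hw| apply ev_zero].
Qed.

Lemma pred_fw A n : eval A PRED n (pred n).
Proof.
  unfold PRED. eapply ev_comp. apply ev_pair; [apply ev_zero | apply ev_id].
  induction n.
  - apply ev_rec0. apply ev_zero.
  - eapply ev_recS; [exact IHn|]. simpl. eapply ev_comp; [apply ev_snd | apply ev_fst].
Qed.

Lemma snd0 A : eval A CSnd 0 0.
Proof. exact (ev_snd A 0 0). Qed.

Lemma skipn_cons_S {T} n (t : list T) b r : skipn n t = b :: r -> skipn (S n) t = r.
Proof.
  revert t; induction n; intros [|c t] H; simpl in *; try discriminate.
  - injection H; auto.
  - apply IHn in H. exact H.
Qed.

Lemma skipn_nil_S {T} n (t : list T) : skipn n t = [] -> skipn (S n) t = [].
Proof.
  revert t; induction n; intros [|c t] H; simpl in *; try discriminate; auto.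
Qed.

Lemma rec_fw A t n : eval A REC (cpair (scode t) n) (scode (skipn n t)).
Proof.
  unfold REC. induction n.
  - apply ev_rec0. apply ev_id.
  - eapply ev_recS; [exact IHn|]. unfold TAILSTEP.
    eapply ev_comp; [eapply ev_comp; [eapply ev_comp; [apply ev_snd | apply ev_snd]| apply pred_fw]|].
    destruct (skipn n t) as [|b r] eqn:E.
    + rewrite (skipn_nil_S _ _ E). simpl. apply snd0.
    + rewrite (skipn_cons_S _ _ _ _ E). simpl. apply ev_snd.
Qed.

Lemma skipn_nth {T} n (t : list T) d : n < length t -> skipn n t = nth n t d :: skipn (S n) t.
Proof.
  revert t; induction n; intros [|c t] H; simpl in *; try lia; auto.
  apply IHn. lia.
Qed.

Lemma skipn_cons_nth {T} n (t : list T) d b r : skipn n t = b :: r -> n < length t /\ nth n t d = b.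
Proof.
  revert t; induction n; intros [|c t] H; simpl in *; try discriminate.
  - injection H; intros; subst; split; auto; lia.
  - apply IHn in H. split; [lia| tauto].
Qed.

Lemma lk_fw A t n : n < length t -> eval A LK (cpair (scode t) n) (if nth n t false then 1 else 0).
Proof.
  intros Hn. unfold LK. eapply ev_comp; [apply rec_fw|].
  rewrite (skipn_nth n t false Hn). simpl.
  set (w := S _).
  unfold HEAD. apply ev_comp with (w := cpair (if nth n t false then 1 else 0) (scode (skipn (S n) t))); [|apply ev_fst].
  apply ev_comp with (w := w); [|apply pred_fw].
  unfold CHK. apply ev_comp with (w := cpair w 0); [|apply ev_fst].
  apply ev_pair; [apply ev_id|]. apply ev_mu.
  - unfold NZ. eapply ev_comp; [apply ev_fst| apply not_fw].
  - intros; lia.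
Qed.

Ltac inv_eval := repeat (match goal with
  | H : eval _ (CComp _ _) _ _ |- _ => inversion H; subst; clear H
  | H : eval _ (CPair _ _) _ _ |- _ => inversion H; subst; clear H
  | H : eval _ CFst _ _ |- _ => inversion H; subst; clear H
  | H : eval _ CSnd _ _ |- _ => inversion H; subst; clear H
  | H : eval _ CId _ _ |- _ => inversion H; subst; clear H
  | H : eval _ CZero _ _ |- _ => inversion H; subst; clear H
  | H : eval _ CSucc _ _ |- _ => inversion H; subst; clear H
  end; cpinj).

Lemma lk_sound A t n v : eval A LK (cpair (scode t) n) v -> n < length t /\ v = (if nth n t false then 1 else 0).
Proof.
  intros H. unfold LK, HEAD, CHK in H.
  inversion H; subst; clear H.
  match goal with Hr : eval _ REC _ _ |- _ => pose proof (eval_det _ _ _ _ Hr _ (rec_fw A t n)); subst; clear Hr end.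
  inv_eval.
  match goal with Hm : eval _ (CMu _) _ _ |- _ => inversion Hm; subst; clear Hm end.
  unfold NZ in *. inv_eval.
  pose proof (eval_det _ _ _ _ H7 _ (not_fw _ _)) as E0.
  pose proof (eval_det _ _ _ _ H6 _ (pred_fw _ _)) as E1.
  destruct (skipn n t) as [|c r] eqn:E; simpl in *; try discriminate.
  cpinj.
  apply (skipn_cons_nth _ _ false) in E. destruct E as [E2 E3]. rewrite E3. auto.
Qed.


Definition R1 := CPair (CPair CFst (CComp CFst CSnd)) (CComp CSnd CSnd).
Definition R2 := CPair (CComp CFst CFst) (CPair (CComp CSnd CFst) CSnd).

Fixpoint tr (c : code) : code := match c with
| CZero => CComp CZero CSnd
| CSucc => CComp CSucc CSnd
| CId => CSnd
| COracle => LK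
| CFst => CComp CFst CSnd
| CSnd => CComp CSnd CSnd
| CPair f g => CPair (tr f) (tr g)
| CComp f g => CComp (tr f) (CPair CFst (tr g))
| CRec f g => CComp (CRec (tr f) (CComp (tr g) R2)) R1
| CMu f => CMu (CComp (tr f) R2)
end.

Lemma R1_fw A t x n : eval A R1 (cpair t (cpair x n)) (cpair (cpair t x) n).
Proof.
  unfold R1. apply ev_pair. apply ev_pair. apply ev_fst.
  eapply ev_comp; [apply ev_snd| apply ev_fst].
  eapply ev_comp; [apply ev_snd| apply ev_snd].
Qed.

Lemma R2_fw A t x n : eval A R2 (cpair (cpair t x) n) (cpair t (cpair x n)).
Proof.
  unfold R2. apply ev_pair.
  eapply ev_comp; [apply ev_fst| apply ev_fst].
  apply ev_pair. eapply ev_comp; [apply ev_fst| apply ev_snd]. apply ev_snd.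
Qed.

Lemma tr_sound A z c : forall t n v, eval A (tr c) (cpair (scode t) n) v -> init_seg t z -> eval z c n v.
Proof.
  induction c; intros t n v H Hz; simpl in H.
  - inv_eval. apply ev_zero.
  - inv_eval. apply ev_succ.
  - inv_eval. apply ev_id.
  - apply lk_sound in H. destruct H as [H1 H2]. subst. rewrite (Hz n H1). apply ev_oracle.
  - inv_eval. apply ev_fst.
  - inv_eval. apply ev_snd.
  - inv_eval. apply ev_pair; eauto.
  - inv_eval. eapply ev_comp; eauto.
  - inversion H; subst; clear H. unfold R1 in *. inv_eval.
    revert v H5. induction b; intros v H5.
    + inversion H5; subst; cpinj; try discriminate. apply ev_rec0. eauto.
    + inversion H5; subst; cpinj; try discriminate.
      match goal with Hs : S _ = S _ |- _ => injection Hs as -> end.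
      unfold R2 in *. inv_eval.
      eapply ev_recS; eauto.
  - inversion H; subst; clear H. unfold R2 in *.
    apply ev_mu.
    + inv_eval. eauto.
    + intros m Hm. destruct (H2 m Hm) as [k Hk].
      exists k. inv_eval. eauto.
Qed.

Lemma unif (R : nat -> nat -> Prop) n : (forall m K K', K <= K' -> R m K -> R m K') ->
  (forall m, m < n -> exists K, R m K) -> exists K, forall m, m < n -> R m K.
Proof.
  intros Hmono. induction n; intros H.
  - exists 0. intros; lia.
  - destruct IHn as [K1 HK1]. { intros m Hm. apply H. lia. }
    destruct (H n) as [K2 HK2]. lia.
    exists (max K1 K2). intros m Hm.
    destruct (Nat.eq_dec m n). subst. eapply Hmono; [|exact HK2]; lia.
    eapply Hmono; [|apply HK1]; lia.
Qed.

Lemma tr_complete A z c n v : eval z c n v ->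
  exists k, forall t, init_seg t z -> k <= length t -> eval A (tr c) (cpair (scode t) n) v.
Proof.
  induction 1 using eval_ind2; simpl.
  - exists 0. intros. eapply ev_comp; [apply ev_snd| apply ev_zero].
  - exists 0. intros. eapply ev_comp; [apply ev_snd| apply ev_succ].
  - exists 0. intros. apply ev_snd.
  - exists (S x). intros t Ht Hl. rewrite <- (Ht x) by lia. apply lk_fw. lia.
  - exists 0. intros. eapply ev_comp; [apply ev_snd| apply ev_fst].
  - exists 0. intros. eapply ev_comp; [apply ev_snd| apply ev_snd].
  - destruct IHeval1 as [k1 H1], IHeval2 as [k2 H2]. exists (max k1 k2). intros.
    apply ev_pair; [apply H1 | apply H2]; auto; lia.
  - destruct IHeval1 as [k1 H1], IHeval2 as [k2 H2]. exists (max k1 k2). intros.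
    eapply ev_comp; [apply ev_pair; [apply ev_fst| apply H1]|apply H2]; auto; lia.
  - destruct IHeval as [k1 H1]. exists k1. intros.
    eapply ev_comp; [apply R1_fw|]. apply ev_rec0. auto.
  - destruct IHeval1 as [k1 H1], IHeval2 as [k2 H2]. exists (max k1 k2). intros t Ht Hl.
    eapply ev_comp; [apply R1_fw|].
    assert (Hin : eval A (CRec (tr f) (CComp (tr g) R2)) (cpair (cpair (scode t) x) n) w).
    { specialize (H1 t Ht ltac:(lia)). simpl in H1. inversion H1; subst.
      pose proof (eval_det _ _ _ _ H5 _ (R1_fw _ _ _ _)). subst. auto. }
    eapply ev_recS; [exact Hin|]. eapply ev_comp; [apply R2_fw|]. apply H2; auto; lia.
  - destruct IHeval as [k0 Hk0].
    destruct (unif (fun m K => forall t, init_seg t z -> K <= length t ->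
         exists kv, eval A (tr f) (cpair (scode t) (cpair x m)) (S kv)) n) as [K HK].
    { intros m K K' HKK HR t Ht Hl. apply HR; auto; lia. }
    { intros m Hm. destruct (H0 m Hm) as [kv [_ [K HK]]]. exists K. intros t Ht Hl. exists kv. auto. }
    exists (max k0 K). intros t Ht Hl. apply ev_mu.
    + eapply ev_comp; [apply R2_fw|]. apply Hk0; auto; lia.
    + intros m Hm. destruct (HK m Hm t Ht ltac:(lia)) as [kv Hkv]. exists kv.
      eapply ev_comp; [apply R2_fw|]. auto.
Qed.


Definition pref (z : real) m : bstring := map z (seq 0 m).

Lemma pref_len z m : length (pref z m) = m.
Proof. unfold pref. rewrite length_map, length_seq. auto. Qed.

Lemma pref_init z m : init_seg (pref z m) z.
Proof.
  intros i Hi. rewrite pref_len in Hi. unfold pref.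
  rewrite (nth_indep _ false (z 0)) by (rewrite length_map, length_seq; auto).
  rewrite map_nth, seq_nth by auto. auto.
Qed.

Lemma pref_ext z t m : init_seg t z -> length t <= m -> extends (pref z m) t.
Proof.
  intros Ht Hl. unfold extends, pref.
  replace m with (length t + (m - length t)) by lia.
  rewrite seq_app, map_app. eexists. f_equal.
  apply (nth_ext _ _ false false).
  - rewrite length_map, length_seq; auto.
  - intros n Hn. rewrite length_map, length_seq in Hn.
    rewrite (nth_indep _ false (z 0)) by (rewrite length_map, length_seq; auto).
    rewrite map_nth, seq_nth by auto. simpl. symmetry. apply Ht. auto.
Qed.

Lemma genA x z : pair_one_generic_over zero_real x z -> one_generic_over z x.
Proof.
  intros HP S [c Hc].
  set (TC := CComp (tr c) (CPair CSnd CFst)).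
  destruct (HP (fun s t => exists v, eval zero_real TC (cpair (scode s) (scode t)) v))
    as [s [t [Hs [Ht [HT | Hno]]]]].
  { exists TC. intros; reflexivity. }
  - exists s. split; auto. left. apply Hc. destruct HT as [v HT]. unfold TC in HT.
    inv_eval. exists v. eapply tr_sound; eauto.
  - exists s. split; auto. right. intros s' Hext HS.
    apply Hc in HS. destruct HS as [v HS].
    destruct (tr_complete zero_real _ _ _ _ HS) as [k Hk].
    apply (Hno s' (pref z (max k (length t))) Hext).
    + apply pref_ext; auto; lia.
    + exists v. unfold TC. eapply ev_comp.
      * apply ev_pair; [apply ev_snd| apply ev_fst].
      * apply Hk. apply pref_init. rewrite pref_len. lia.
Qed.

Definition E := CRec NOT CFst.
Lemma E_fw (A : real) (a b : bool) : eval A E (cpair (if a then 1 else 0) (if b then 1 else 0)) (if Bool.eqb a b then 1 else 0).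
Proof.
  unfold E. destruct b.
  - eapply ev_recS. apply ev_rec0. apply not_fw. destruct a; apply ev_fst.
  - apply ev_rec0. destruct a; apply not_fw.
Qed.

Definition RR := CPair (CComp CSnd CFst) CSnd.
Definition FF d := CComp E (CPair (CComp LK RR) (CComp d CSnd)).

Lemma RR_fw A s t i : eval A RR (cpair (cpair s t) i) (cpair t i).
Proof. unfold RR. apply ev_pair. eapply ev_comp; [apply ev_fst| apply ev_snd]. apply ev_snd. Qed.

Lemma genB y u w : pair_one_generic_over y u w -> turing_le w y -> False.
Proof.
  intros HP [d Hd].
  destruct (HP (fun s t => exists v, eval y (CMu (FF d)) (cpair (scode s) (scode t)) v))
    as [s [t [Hs [Ht [HT | Hno]]]]].
  { exists (CMu (FF d)). intros; reflexivity. }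
  - destruct HT as [v HT]. inversion HT; subst. unfold FF in *. inv_eval.
    match goal with Hr : eval _ RR _ _ |- _ => pose proof (eval_det _ _ _ _ Hr _ (RR_fw _ _ _ _)); subst end.
    match goal with Hl : eval _ LK _ _ |- _ => apply lk_sound in Hl; destruct Hl as [Hl1 Hl2]; subst end.
    match goal with Hl : eval _ d _ _ |- _ => pose proof (eval_det _ _ _ _ Hl _ (Hd v)); subst end.
    rewrite (Ht v Hl1) in *.
    match goal with Hl : eval _ E _ 0 |- _ => pose proof (eval_det _ _ _ _ Hl _ (E_fw _ _ _)) as Hc end.
    rewrite eqb_reflx in Hc. discriminate.
  - set (b := negb (w (length t))).
    assert (Hnth : forall m, m < length t -> nth m (t ++ [b]) false = w m).
    { intros m Hm. rewrite app_nth1 by auto. apply Ht; auto. }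
    assert (Hlast : nth (length t) (t ++ [b]) false = b).
    { rewrite app_nth2 by lia. rewrite Nat.sub_diag. reflexivity. }
    assert (Hlen : length (t ++ [b]) = S (length t)).
    { rewrite length_app. simpl. lia. }
    apply (Hno s (t ++ [b])).
    + exists []. rewrite app_nil_r. auto.
    + exists [b]. reflexivity.
    + exists (length t). apply ev_mu.
      * unfold FF. replace 0 with (if eqb b (w (length t)) then 1 else 0) by (unfold b; destruct (w (length t)); reflexivity).
        eapply ev_comp; [|apply (E_fw _ b (w (length t)))].
        apply ev_pair.
        -- eapply ev_comp; [apply RR_fw|]. replace (if b then 1 else 0) with (if nth (length t) (t ++ [b]) false then 1 else 0) by (rewrite Hlast; auto). apply lk_fw. lia.
        -- eapply ev_comp; [apply ev_snd|]. apply Hd.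
      * intros m Hm. exists 0. unfold FF. replace 1 with (if eqb (w m) (w m) then 1 else 0) by (rewrite eqb_reflx; reflexivity). eapply ev_comp; [|apply (E_fw _ (w m) (w m))].
        apply ev_pair.
        -- eapply ev_comp; [apply RR_fw|]. replace (if w m then 1 else 0) with (if nth m (t ++ [b]) false then 1 else 0) by (rewrite Hnth; auto). apply lk_fw. lia.
        -- eapply ev_comp; [apply ev_snd|]. apply Hd.
Qed.


Fixpoint sub (d c : code) : code := match c with
| COracle => d
| CPair f g => CPair (sub d f) (sub d g)
| CComp f g => CComp (sub d f) (sub d g)
| CRec f g => CRec (sub d f) (sub d g)
| CMu f => CMu (sub d f)
| c => c
end.

Lemma sub_fw (w z : real) (d : code) : (forall n, eval z d n (if w n then 1 else 0)) ->
  forall c n v, eval w c n v -> eval z (sub d c) n v.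
Proof.
  intros Hd c n v H. induction H using eval_ind2; simpl; try constructor; auto.
  - eapply ev_comp; eauto.
  - eapply ev_recS; eauto.
  - intros m Hm. destruct (H0 m Hm) as [k [_ Hk]]. eauto.
Qed.

Lemma tle_trans x y z : turing_le x y -> turing_le y z -> turing_le x z.
Proof.
  intros [c Hc] [d Hd]. exists (sub d c). intros n. apply (sub_fw y z d Hd). apply Hc.
Qed.

Theorem mainTheorem1 :
  CH ->
  forall a : real -> real,
    degree_automorphism a -> nontrivial_aut a ->
    ~ (exists G : real -> Prop,
          degree_family G /\
          (forall x, G x -> generic_degree x) /\
          (forall y, exists x, G x /\ degree_generic_over x y) /\
          (forall x y, G x -> degree_generic_over x y ->
             exists x' z, turing_eq x' x /\ turing_eq z (a x) /\
                          pair_one_generic_over y x' z)).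
Proof.
  intros _ a _ _ [G [_ [H2 [H3 H4]]]].
  destruct (H3 zero_real) as [x [Gx _]].
  destruct (H4 x zero_real Gx (H2 x Gx)) as [x' [z [Hx' [Hz Hp]]]].
  apply genA in Hp.
  destruct (H4 x z Gx (ex_intro _ x' (conj Hx' Hp))) as [x'' [z' [_ [Hz' Hp']]]].
  apply (genB _ _ _ Hp'). eapply tle_trans; [apply Hz'| apply Hz].
Qed.
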